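(* Let $\mathcal{F}_A$ and $\mathcal{F}_B$ be scaling functions associated with the sets $A = \{p : \mathcal{F}_A(p,\theta) \le 1\}$ and $B = \{p : \mathcal{F}_B(p,\theta) \le 1\}$, respectively, and fix $\theta$. Consider the problem $\min_{p \in \mathbb{R}^{n_p}} \mathcal{F}_A(p,\theta)$ s.t. $\mathcal{F}_B(p,\theta) \le 1$, with Lagrangian $L(p,\theta,\lambda) = \mathcal{F}_A(p,\theta) + \lambda(\mathcal{F}_B(p,\theta) - 1)$. If $A \cap B = \varnothing$, then any pair of an optimal primal variable $p^\star$ and an optimal dual variable $\lambda^\star$ of this problem satisfies $\mathcal{F}_A(p^\star,\theta) > 1$, $\lambda^\star > 0$, $\frac{\partial \mathcal{F}_B}{\partial p}(p^\star,\theta) \ne 0$, and $\mathcal{F}_B(p^\star,\theta) = 1$.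
   Context: A scaling function (with parameters $\theta \in \mathbb{R}^{n_\theta}$) for a closed set $A \subset \mathbb{R}^{n_p}$ with non-empty interior is a $\mathcal{C}^2$ function $\mathcal{F}_A : \mathbb{R}^{n_p} \times \mathbb{R}^{n_\theta} \to \mathbb{R}$ such that, for each $\theta$, $\mathcal{F}_A(\cdot,\theta)$ is convex, $A = \{p \in \mathbb{R}^{n_p} : \mathcal{F}_A(p,\theta) \le 1\}$, and there exists $p \in A$ with $\mathcal{F}_A(p,\theta) < 1$. An optimal primal variable is a minimizer $p^\star$; an optimal dual variable is a $\lambda^\star \ge 0$ maximizing the dual function $\lambda \mapsto \inf_p L(p,\theta,\lambda)$ over $\lambda \ge 0$. *)

(* Defs.v *)
From HB Require Import structures.
From mathcomp Require Import all_boot all_order all_algebra.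
From mathcomp Require Import all_classical all_reals all_analysis.
Set Implicit Arguments. Unset Strict Implicit. Unset Printing Implicit Defensive.
Import Order.TTheory GRing.Theory Num.Theory.
Import numFieldNormedType.Exports.
Local Open Scope classical_set_scope.
Local Open Scope ring_scope.

Section Defs.
Variables (R : realType) (np nth : nat).
Notation V := ('rV[R]_np * 'rV[R]_nth)%type.

(* C^2: differentiable everywhere, every directional derivative is
   differentiable everywhere, and all second directional derivatives
   are continuous (in finite dimension this is exactly C^2). *)
Definition C2 (F : V -> R) : Prop :=
  (forall x : V, differentiable F x) /\
  (forall (v : V) (x : V), differentiable (fun y : V => 'D_v F y) x) /\
  (forall (u v : V), continuous (fun y : V => 'D_u (fun z : V => 'D_v F z) y)).

Definition convex_in_p (F : V -> R) : Prop :=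
  forall (th : 'rV[R]_nth) (x y : 'rV[R]_np) (t : R), 0 <= t <= 1 ->
    F (t *: x + (1 - t) *: y, th) <= t * F (x, th) + (1 - t) * F (y, th).

Definition scaling_function (A : set 'rV[R]_np) (F : V -> R) : Prop :=
  closed A /\ interior A !=set0 /\ C2 F /\ convex_in_p F /\
  (forall th, A = [set p | F (p, th) <= 1]) /\
  (forall th, exists2 p, A p & F (p, th) < 1).

Definition lagrangian (FA FB : V -> R) (p : 'rV[R]_np) (th : 'rV[R]_nth) (l : R) : R :=
  FA (p, th) + l * (FB (p, th) - 1).

(* dual function, valued in extended reals (may be -oo) *)
Definition dual_fun (FA FB : V -> R) (th : 'rV[R]_nth) (l : R) : \bar R :=
  ereal_inf [set (lagrangian FA FB p th l)%:E | p in [set: 'rV[R]_np]].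

Definition optimal_primal (FA FB : V -> R) (th : 'rV[R]_nth) (ps : 'rV[R]_np) : Prop :=
  FB (ps, th) <= 1 /\ forall p, FB (p, th) <= 1 -> FA (ps, th) <= FA (p, th).

Definition optimal_dual (FA FB : V -> R) (th : 'rV[R]_nth) (ls : R) : Prop :=
  0 <= ls /\ forall l, 0 <= l -> (dual_fun FA FB th l <= dual_fun FA FB th ls)%E.

Definition grad_p (F : V -> R) (p : 'rV[R]_np) (th : 'rV[R]_nth) : 'rV[R]_np :=
  \row_i 'D_((delta_mx 0 i : 'rV[R]_np), (0 : 'rV[R]_nth)) F (p, th).

End Defs.

(* Main.v *)
Require Import Defs.
From HB Require Import structures.
From mathcomp Require Import all_boot all_order all_algebra.
From mathcomp Require Import all_classical all_reals all_analysis.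
From mathcomp Require Import ring lra.
Import Order.TTheory GRing.Theory Num.Theory.
Import numFieldNormedType.Exports.
Local Open Scope classical_set_scope.
Local Open Scope ring_scope.

Section L.
Variables (R : realType) (V : normedModType R).

Lemma dq_cvg (F : V -> R) x v : differentiable F x ->
  (fun h : R => h^-1 * (F (h *: v + x) - F x)) @ 0^' --> 'D_v F x.
Proof.
move=> dF; have := @diff_derivable _ _ _ F x v dF; rewrite /derivable => H.
exact: H.
Qed.

Lemma dq_right (F : V -> R) x v : differentiable F x ->
  forall z, 'D_v F x < z -> \forall t \near 0^'+, t^-1 * (F (t *: v + x) - F x) < z.
Proof.
move=> dF z Hz.
have H1 := dq_cvg _ _ v dF.
have H0 := @cvgr_lt R R 0^' _ _ _ H1 z Hz.
have sub : (fun u : R => 0 < u) `<=` (fun u : R => u != 0) by move=> u /= u0; rewrite gt_eqF.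
have H2 : \forall t \near 0^', t^-1 * (F (t *: v + x) - F x) < z by apply: H0; exact: dnbhs_filter.
exact: (within_subset _ sub H2).
Qed.


Lemma right_ex (P1 P2 : R -> Prop) : (\forall t \near 0^'+, P1 t) ->
  (\forall t \near 0^'+, P2 t) -> exists t : R, [/\ 0 < t, t < 1, P1 t & P2 t].
Proof.
move=> H1 H2.
have H4 : \forall t \near (0:R)^'+, 0 < t by apply: near_withinT.
have H3 := nbhs_right_lt (@ltr01 R).
have H : \forall t \near (0:R)^'+, [/\ 0 < t, t < 1, P1 t & P2 t].
  by apply: filter_app H4; apply: filter_app H3; apply: filter_app H2; apply: filterS H1.
exact: (filter_ex H).
Qed.

Lemma dq_right_gt (F : V -> R) x v : differentiable F x ->
  forall z, z < 'D_v F x -> \forall t \near 0^'+, z < t^-1 * (F (t *: v + x) - F x).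
Proof.
move=> dF z Hz.
have H1 := dq_cvg _ _ v dF.
have H0 := @cvgr_gt R R 0^' _ _ _ H1 z Hz.
have sub : (fun u : R => 0 < u) `<=` (fun u : R => u != 0) by move=> u /= u0; rewrite gt_eqF.
have H2 : \forall t \near 0^', z < t^-1 * (F (t *: v + x) - F x) by apply: H0; exact: dnbhs_filter.
exact: (within_subset _ sub H2).
Qed.

Lemma secant (F : V -> R) x v : differentiable F x ->
  (forall t, 0 < t < 1 -> F (t *: v + x) <= t * F (v + x) + (1 - t) * F x) ->
  'D_v F x <= F (v + x) - F x.
Proof.
move=> dF cvx; rewrite leNgt; apply/negP => Hlt.
have [t [t0 t1 Ht _]] := right_ex _ _ (dq_right_gt _ _ v dF _ Hlt) (dq_right_gt _ _ v dF _ Hlt).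
have := cvx t; rewrite t0 t1 => /(_ isT) Hc.
move: Ht; rewrite ltr_pdivlMl // => Ht.
have : t * (F (v + x) - F x) < t * (F (v + x) - F x) by apply: (lt_le_trans Ht); lra.
by rewrite ltxx.
Qed.

Lemma descent (F : V -> R) x v : differentiable F x -> 'D_v F x < 0 ->
  \forall t \near 0^'+, F (t *: v + x) < F x.
Proof.
move=> dF Hz; have H := dq_right _ _ v dF _ Hz.
have H4 : \forall t \near (0:R)^'+, 0 < t by apply: near_withinT.
apply: filter_app H4; apply: filterS H => t Ht t0.
by move: Ht; rewrite pmulr_rlt0 ?invr_gt0 // subr_lt0.
Qed.

End L.
Arguments secant {R V F x v}.
Arguments descent {R V F x v}.
Arguments right_ex {R P1 P2}.

Section M.
Variables (R : realType) (np nth : nat).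
Local Notation V := ('rV[R]_np * 'rV[R]_nth)%type.

Lemma pt (t : R) (d ps : 'rV[R]_np) (th : 'rV[R]_nth) :
  t *: ((d, 0) : V) + (ps, th) = (t *: d + ps, th).
Proof. by congr (_, _) => /=; rewrite ?scaler0 ?add0r. Qed.


Lemma lin_pair (F : V -> R) x : differentiable F x ->
  (forall d1 d2 : 'rV[R]_np, 'D_((d1 + d2, 0) : V) F x = 'D_((d1, 0) : V) F x + 'D_((d2, 0) : V) F x) /\
  (forall (c : R) (d : 'rV[R]_np), 'D_((c *: d, 0) : V) F x = c * 'D_((d, 0) : V) F x).
Proof.
move=> dF; split.
  move=> d1 d2; rewrite !deriveE //.
  have -> : ((d1 + d2, 0) : V) = (d1, 0) + (d2, 0) by congr (_, _) => /=; rewrite addr0.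
  by rewrite linearD.
move=> c d; rewrite !deriveE //.
have -> : ((c *: d, 0) : V) = c *: (d, 0) by congr (_, _) => /=; rewrite scaler0.
by rewrite linearZ.
Qed.

End M.
Arguments lin_pair {R np nth F x}.

Section Ar.
Set Implicit Arguments.
Variable R : realFieldType.
Implicit Types a ae b be bd ad lam fa fas fb : R.
Lemma ar_bez (a ae b : R) : 0 <= ae -> b < 0 ->
  (forall eps, 0 < eps -> eps * b < 0 -> 0 <= a + eps * ae) -> 0 <= a.
Proof.
move=> ae0 b0 H; rewrite leNgt; apply/negP => Ha.
pose eps := - a / (2 * (ae + 1)).
have he : eps * (2 * (ae + 1)) = - a by rewrite /eps mulfVK // gt_eqF //; lra.
have eps0 : 0 < eps by rewrite /eps divr_gt0 //; lra.
have := H eps eps0; rewrite pmulr_rlt0 // => /(_ b0).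
have : eps * ae <= eps * (ae + 1) by rewrite ler_wpM2l ?ltW //; lra.
lra.
Qed.

Lemma ar_lam0 (ae be : R) : be < 0 -> 0 <= ae -> 0 <= ae / - be.
Proof. by move=> b0 a0; rewrite divr_ge0 // oppr_ge0 ltW. Qed.

Lemma ar_bd' (bd be : R) : be != 0 -> bd + -1 * (bd / be * be) = 0.
Proof. by move=> h; field. Qed.

Lemma ar_stat (ad ae bd be : R) : be != 0 ->
  0 <= ad + -1 * (bd / be * ae) -> 0 <= -1 * (ad + -1 * (bd / be * ae)) ->
  ad + ae / - be * bd = 0.
Proof.
move=> h h1 h2.
have -> : ad = bd / be * ae by lra.
by field.
Qed.

Lemma ar_L (lam ad bd fa fas fb : R) : 0 <= lam -> ad <= fa - fas -> bd <= fb - 1 ->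
  ad + lam * bd = 0 -> fas <= fa + lam * (fb - 1).
Proof.
move=> l0 h1 h2 h3.
have : lam * bd <= lam * (fb - 1) by rewrite ler_wpM2l.
lra.
Qed.
End Ar.

Theorem lemma2 (R : realType) (np nth : nat)
  (A B : set 'rV[R]_np) (FA FB : 'rV[R]_np * 'rV[R]_nth -> R)
  (th : 'rV[R]_nth) (ps : 'rV[R]_np) (ls : R) :
  scaling_function A FA -> scaling_function B FB ->
  A `&` B = set0 ->
  optimal_primal FA FB th ps -> optimal_dual FA FB th ls ->
  [/\ 1 < FA (ps, th), 0 < ls, grad_p FB ps th != 0 & FB (ps, th) = 1].
Proof.
move=> [_ [_ [[dFA _] [cvxA [eqA exA]]]]] [_ [_ [[dFB _] [cvxB [eqB exB]]]]] AB.
move=> [psB psopt] [ls0 lsopt].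
have [p0 Ap0 FAp0] := exA th.
have [q Bq FBq] := exB th.
have FAps : 1 < FA (ps, th).
  rewrite ltNge; apply/negP => H.
  have : (A `&` B) ps by split; [rewrite (eqA th) | rewrite (eqB th)].
  by rewrite AB.
have cvxl : forall F : _ -> R, convex_in_p F -> forall (d : 'rV[R]_np) (t : R), 0 < t < 1 ->
    F (t *: ((d, 0) : _ * 'rV[R]_nth) + (ps, th)) <= t * F ((d, 0) + (ps, th)) + (1 - t) * F (ps, th).
  move=> F cvF d t /andP[t0 t1]; rewrite !pt -[(d, 0) + _]/(d + ps, 0 + th) add0r.
  have := cvF th (d + ps) ps t; rewrite ltW // ltW // => /(_ isT).
  have -> : t *: (d + ps) + (1 - t) *: ps = t *: d + ps.
    by rewrite scalerDr scalerBl scale1r addrA addrAC addrK.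
  done.
have FBps : FB (ps, th) = 1.
  apply/eqP; rewrite eq_le psB /= leNgt; apply/negP => Hb.
  set b := FB (ps, th) in Hb *; set c := FB (p0, th) - b.
  set t := (1 - b) / (1 - b + `|c|).
  have hc := normr_ge0 c.
  have hden : 0 < 1 - b + `|c| by lra.
  have ht : t * (1 - b + `|c|) = 1 - b by rewrite /t mulfVK // gt_eqF.
  have t0 : 0 < t by rewrite /t divr_gt0 // subr_gt0.
  have t1 : t <= 1 by rewrite /t ler_pdivrMr // mul1r; lra.
  have tc : t * c <= t * `|c| by apply: ler_wpM2l; [exact: ltW | exact: ler_norm].
  have tb : 0 < t * (1 - b) by rewrite mulr_gt0 // subr_gt0.
  have ht01 : 0 <= t <= 1 by rewrite ltW.
  have HB := cvxB th p0 ps t ht01.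
  have HA := cvxA th p0 ps t ht01.
  have := psopt (t *: p0 + (1 - t) *: ps).
  have -> : FB (t *: p0 + (1 - t) *: ps, th) <= 1.
    apply: (le_trans HB); rewrite -/b.
    have -> : t * FB (p0, th) + (1 - t) * b = b + t * c by rewrite /c; ring.
    lra.
  move=> /(_ isT) HA2.
  have : t * FA (p0, th) + (1 - t) * FA (ps, th) < FA (ps, th).
    have : t * FA (p0, th) < t * FA (ps, th) by rewrite ltr_pM2l //; lra.
    lra.
  lra.
have [linA1 linA2] := lin_pair (dFA (ps, th)).
have [linB1 linB2] := lin_pair (dFB (ps, th)).
pose al : 'rV[R]_np -> R := fun d => 'D_((d, 0) : _ * 'rV[R]_nth) FA (ps, th).
pose be : 'rV[R]_np -> R := fun d => 'D_((d, 0) : _ * 'rV[R]_nth) FB (ps, th).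
have secA : forall p, al (p - ps) <= FA (p, th) - FA (ps, th).
  move=> p; have := secant (dFA (ps, th)) (cvxl _ cvxA (p - ps)).
  by rewrite -[(p - ps, 0) + _]/(p - ps + ps, 0 + th) add0r subrK.
have secB : forall p, be (p - ps) <= FB (p, th) - 1.
  move=> p; have := secant (dFB (ps, th)) (cvxl _ cvxB (p - ps)).
  by rewrite -[(p - ps, 0) + _]/(p - ps + ps, 0 + th) add0r subrK FBps.
have alD : forall d1 d2, al (d1 + d2) = al d1 + al d2 := linA1.
have alZ : forall c d, al (c *: d) = c * al d := linA2.
have beD : forall d1 d2, be (d1 + d2) = be d1 + be d2 := linB1.
have beZ : forall c d, be (c *: d) = c * be d := linB2.
clear linA1 linA2 linB1 linB2.
set e := q - ps.
have bee : be e < 0 by apply: (le_lt_trans (secB q)); lra.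
have grad : grad_p FB ps th != 0.
  apply/negP => /eqP G.
  have H0 : forall i, be (delta_mx 0 i) = 0.
    by move=> i; have := congr1 (fun M : 'rV[R]_np => M ord0 i) G; rewrite /grad_p !mxE.
  have : be e = 0.
    rewrite (row_sum_delta e).
    have -> : be (\sum_(j < np) e 0 j *: delta_mx 0 j) = \sum_(j < np) e 0 j * be (delta_mx 0 j).
      apply: (big_rec2 (fun y1 y2 => be y1 = y2)).
        by have := beZ 0 0; rewrite scale0r mul0r.
      move=> i y1 y2 _ <-.
      have h1 := beD (e 0 i *: delta_mx 0 i) y1.
      have h2 := beZ (e 0 i) (delta_mx 0 i).
      exact: (etrans h1 (congr1 (fun z => z + be y1) h2)).
    by rewrite big1 // => j _; rewrite H0 mulr0.
  lra.
have kkt0 : forall d, be d < 0 -> 0 <= al d.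
  move=> d Hd; rewrite leNgt; apply/negP => Ha.
  have [t [t0 t1 H1 H2]] := right_ex (descent (dFA (ps, th)) Ha) (descent (dFB (ps, th)) Hd).
  move: H1 H2; rewrite !pt FBps => H1 H2.
  have := psopt _ (ltW H2); lra.
have bez : forall d, be d = 0 -> 0 <= al d.
  move=> d Hd; apply: (@ar_bez R (al d) (al e) (be e) (kkt0 _ bee) bee) => eps eps0 h.
  have := kkt0 (d + eps *: e); rewrite alD alZ beD beZ Hd add0r.
  by apply.
pose lam := al e / (- be e).
have lam0 : 0 <= lam by apply: ar_lam0 => //; apply: kkt0.
have stat : forall d, al d + lam * be d = 0.
  move=> d; set d' := d - (be d / be e) *: e.
  have bd' : be d' = 0.
    rewrite /d' beD -scaleN1r beZ beZ.
    by apply: ar_bd'; rewrite lt_eqF.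
  have ad'1 := bez _ bd'.
  have ad'2 : 0 <= al (- d').
    by apply: bez; rewrite -scaleN1r beZ bd' mulr0.
  move: ad'2; rewrite -scaleN1r alZ => ad'2.
  move: ad'1 ad'2; rewrite /d' alD -scaleN1r alZ alZ.
  by apply: ar_stat; rewrite lt_eqF.
have Llb : forall p, FA (ps, th) <= lagrangian FA FB p th lam.
  move=> p; rewrite /lagrangian.
  exact: (@ar_L R lam (al (p - ps)) (be (p - ps)) (FA (p, th)) (FA (ps, th)) (FB (p, th)) lam0 (secA p) (secB p) (stat (p - ps))).
have dl : ((FA (ps, th))%:E <= dual_fun FA FB th lam)%E.
  apply: le_ereal_inf_tmp => _ [p _ <-]; rewrite lee_fin; exact: Llb.
have d0 : (dual_fun FA FB th 0 <= (FA (p0, th))%:E)%E.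
  apply: ereal_inf_lbound; exists p0 => //; by rewrite /lagrangian mul0r addr0.
have ls_ne0 : ls != 0.
  apply/eqP => ls00; have := lsopt lam lam0; rewrite ls00 => H.
  have := le_trans dl (le_trans H d0); rewrite lee_fin => h.
  by have := lt_trans (le_lt_trans h FAp0) FAps; rewrite ltxx.
split => //; by rewrite lt_neqAle eq_sym ls_ne0.
Qed.
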